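(* Let $0<s<1$, $0<\tilde\delta<1/16$ and $1<\tilde R<1/s$, and let $n_0$ be the constant of the context. Then there exists $m_0''\in\mathbb{N}$ (depending on $s,\tilde\delta,\tilde R$) such that whenever $m>m_0''$, $1< R<\min(\tilde R,3/2)$, $(r_j)_{j=1}^{m-1}\in E_{\varepsilon}$ with $\varepsilon=\log(R^{1/n_0})$, $w\in\overline D(0,3/4)$ and $\tilde\delta\le\delta\le 1/16$, the map $\iota=\iota^{w,\delta,m,R,(r_j)}$ satisfies \[\operatorname{supp}(\iota_{\bar z})\subset\{z\in\mathbb{D}:|z|>s\}.\]
   Context: $\psi_{\delta,m}$: with $b(x)=\exp(1+\frac1{x^2-1})$ for $0\le x<1$, $b(x)=0$ for $x\ge 1$, $r=1-4\delta/m$, $\hat\eta(x)=1$ for $x\le r$, $\hat\eta(x)=b(\frac{x-r}{1-r})$ for $r\le x\le1$, $\hat\eta(x)=0$ for $x\ge1$, set $\psi_{\delta,m}(z)=z^m+\delta z\hat\eta(|z|)$ on $\mathbb{D}$. $\beta_{R,M,(r_j)}$ for $M\in\mathbb N$, $R>1$, $(r_j)_{j=1}^M\in E_\varepsilon$ (where $\xi_j=e^{(2j-1)\pi i/M}$ and $E_\varepsilon=\{(r_j)\in\prod_{j=1}^M\exp(\overline D(0,\varepsilon)):\frac{r_{j+1}\xi_{j+1}-r_j\xi_j}{\xi_{j+1}-\xi_j}\in\exp(\overline D(0,\varepsilon)),1\le j\le M\}$, indices mod $M$): it equals the identity on $|z|\ge R$ and $|z|\le R^{-1}$, and on $R^{-1}<|z|<R$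 it is $\beta(e^\zeta)=e^{\hat\beta(\zeta)}$ where $\hat\beta$ is the $2\pi i$-periodic piecewise affine map on the strip $|\operatorname{Re}\zeta|\le\log R$, affine on the triangles $(a_j,a_{j+1},a_j^{\pm})$, $(a_{j+1},a_j^{\pm},a_{j+1}^{\pm})$ with $a_j=(2j-1)\pi i/M$, $a_j^\pm=\pm\log R+a_j$, fixing $a_j^\pm$ and sending $a_j\mapsto a_j+\operatorname{Log}r_j$. There are constants $m_0'$, $n_0$ such that for $M>m_0'$, $1<R<3/2$, $\varepsilon=\log(R^{1/n_0})$ this $\beta$ is a quasiconformal homeomorphism of $\mathbb{C}$ with $\beta(\xi_j)=r_j\xi_j$. For $\Lambda>0$ set $\beta^\Lambda(z)=\Lambda\beta(z/\Lambda)$. $\rho_w$ for $w\in\overline D(0,3/4)$: $\rho_w(z)=z+w$ for $|z|\le1/8$ and $\rho_w(z)=z\frac{8|z|-1}{7}+(z+w)\frac{8-8|z|}{7}$ for $1/8\le|z|\le1$. $\Lambda(\delta,m)=\delta(\delta/m)^{1/(m-1)}\frac{m-1}{m}$, and $\iota^{w,\delta,m,R,(r_j)}=\rho_w\circ\beta^{\Lambda(\delta,m)}_{R,m-1,(r_j)_{j=1}^{m-1}}\circ\psi_{\delta,m}:\mathbb{D}\to\mathbb{D}$. *)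

(* Defs.v *)
From Stdlib Require Import Reals Lra ZArith.
Open Scope R_scope.

Definition Cplx : Type := (R * R)%type.
Definition Cre (z : Cplx) : R := fst z.
Definition Cim (z : Cplx) : R := snd z.
Definition C0 : Cplx := (0, 0).
Definition C1 : Cplx := (1, 0).
Definition Ci : Cplx := (0, 1).
Definition Cadd (z w : Cplx) : Cplx := (Cre z + Cre w, Cim z + Cim w).
Definition Copp (z : Cplx) : Cplx := (- Cre z, - Cim z).
Definition Csub (z w : Cplx) : Cplx := Cadd z (Copp w).
Definition Cmul (z w : Cplx) : Cplx :=
  (Cre z * Cre w - Cim z * Cim w, Cre z * Cim w + Cim z * Cre w).
Definition Cscal (a : R) (z : Cplx) : Cplx := (a * Cre z, a * Cim z).
Definition Cabs (z : Cplx) : R := sqrt (Cre z * Cre z + Cim z * Cim z).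
Definition Cinv (z : Cplx) : Cplx :=
  let d := Cre z * Cre z + Cim z * Cim z in (Cre z / d, - Cim z / d).
Definition Cdiv (z w : Cplx) : Cplx := Cmul z (Cinv w).
Fixpoint Cpow (z : Cplx) (n : nat) : Cplx :=
  match n with O => C1 | S k => Cmul z (Cpow z k) end.
Definition Cexp (z : Cplx) : Cplx := (exp (Cre z) * cos (Cim z), exp (Cre z) * sin (Cim z)).
(* principal argument in (-PI, PI] *)
Definition Carg (z : Cplx) : R :=
  let x := Cre z in let y := Cim z in
  if Rlt_dec 0 x then atan (y / x)
  else if Rlt_dec x 0 then
         (if Rle_dec 0 y then atan (y / x) + PI else atan (y / x) - PI)
  else if Rlt_dec 0 y then PI / 2
  else if Rlt_dec y 0 then - (PI / 2) else 0.
Definition CLog (z : Cplx) : Cplx := (ln (Cabs z), Carg z).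

Definition in_exp_closed_disc (eps : R) (z : Cplx) : Prop :=
  exists zeta : Cplx, Cabs zeta <= eps /\ z = Cexp zeta.

Definition bump (x : R) : R :=
  if Rle_dec 0 x then (if Rlt_dec x 1 then exp (1 + / (x * x - 1)) else 0) else 0.

Definition eta_hat (delta : R) (m : nat) (x : R) : R :=
  let r := 1 - 4 * delta / INR m in
  if Rle_dec x r then 1
  else if Rle_dec x 1 then bump ((x - r) / (1 - r))
  else 0.

Definition psi (delta : R) (m : nat) (z : Cplx) : Cplx :=
  Cadd (Cpow z m) (Cscal (delta * eta_hat delta m (Cabs z)) z).

(* indices are taken mod M, in {1,...,M}: successor of j *)
Definition idx_next (M j : nat) : nat := if Nat.eqb j M then 1%nat else S j.

Definition xi (M j : nat) : Cplx := Cexp (0, (2 * INR j - 1) * PI / INR M).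

(* E_eps for a sequence r : nat -> Cplx (only r 1, ..., r M matter) *)
Definition E_eps (M : nat) (eps : R) (r : nat -> Cplx) : Prop :=
  forall j : nat, (1 <= j <= M)%nat ->
    in_exp_closed_disc eps (r j) /\
    in_exp_closed_disc eps
      (Cdiv (Csub (Cmul (r (idx_next M j)) (xi M (idx_next M j))) (Cmul (r j) (xi M j)))
            (Csub (xi M (idx_next M j)) (xi M j))).

(* floor via Stdlib's [up] : IZR (up x) - 1 <= x < IZR (up x) *)
Definition floorR (x : R) : Z := (up x - 1)%Z.

(* The 2 pi i-periodic piecewise affine map hat-beta on the strip
   |Re zeta| <= log R.  Writing  a_j = i y_j, y_j = (2j-1) pi / M,
   L = log R, and for zeta with y_j <= Im zeta < y_{j+1}:
     x = |Re zeta| / L in [0,1],  u = (Im zeta - y_j) / (2 pi / M) in [0,1],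
   the point zeta lies in the triangle (a_j, a_{j+1}, a_j^{+-}) iff x + u <= 1
   and in (a_{j+1}, a_j^{+-}, a_{j+1}^{+-}) iff x + u >= 1.  The affine map on a
   triangle fixing a_j^{+-}, a_{j+1}^{+-} and sending a_k to a_k + Log r_k is
   zeta |-> zeta + (barycentric interpolation of the vertex displacements):
     x + u <= 1 :  zeta + (1-x-u) Log r_j + u Log r_{j+1}
     x + u >= 1 :  zeta + (1-x) Log r_{j+1}
   (the two formulas agree on x + u = 1). *)
Definition beta_hat (R0 : R) (M : nat) (r : nat -> Cplx) (zeta : Cplx) : Cplx :=
  let L := ln R0 in
  let th := Cim zeta in
  let j0 := floorR ((th * INR M / PI + 1) / 2) in
  let jj := Z.to_nat (Z.modulo (j0 - 1) (Z.of_nat M) + 1) in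
  let jn := idx_next M jj in
  let yj := (2 * IZR j0 - 1) * PI / INR M in
  let u := (th - yj) / (2 * PI / INR M) in
  let x := Rabs (Cre zeta) / L in
  let disp :=
    if Rle_dec (x + u) 1
    then Cadd (Cscal (1 - x - u) (CLog (r jj))) (Cscal u (CLog (r jn)))
    else Cscal (1 - x) (CLog (r jn)) in
  Cadd zeta disp.

Definition beta (R0 : R) (M : nat) (r : nat -> Cplx) (z : Cplx) : Cplx :=
  if Rle_dec R0 (Cabs z) then z
  else if Rle_dec (Cabs z) (/ R0) then z
  else Cexp (beta_hat R0 M r (CLog z)).

Definition betaL (Lam R0 : R) (M : nat) (r : nat -> Cplx) (z : Cplx) : Cplx :=
  Cscal Lam (beta R0 M r (Cscal (/ Lam) z)).

Definition rho (w : Cplx) (z : Cplx) : Cplx :=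
  if Rle_dec (Cabs z) (1 / 8) then Cadd z w
  else Cadd (Cscal ((8 * Cabs z - 1) / 7) z) (Cscal ((8 - 8 * Cabs z) / 7) (Cadd z w)).

Definition Lambda (delta : R) (m : nat) : R :=
  delta * Rpower (delta / INR m) (1 / (INR m - 1)) * ((INR m - 1) / INR m).

Definition iota (w : Cplx) (delta : R) (m : nat) (R0 : R) (r : nat -> Cplx) (z : Cplx) : Cplx :=
  rho w (betaL (Lambda delta m) R0 (m - 1) r (psi delta m z)).

(* f is real-differentiable at z with partial derivatives p = f_x, q = f_y *)
Definition real_diff_at (f : Cplx -> Cplx) (z p q : Cplx) : Prop :=
  forall eps : R, 0 < eps -> exists d : R, 0 < d /\
    forall h : Cplx, Cabs h < d ->
      Cabs (Csub (Csub (f (Cadd z h)) (f z))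
                 (Cadd (Cscal (Cre h) p) (Cscal (Cim h) q))) <= eps * Cabs h.

(* f_{zbar}(z) = (f_x + i f_y)/2 exists and vanishes at z *)
Definition dbar_zero_at (f : Cplx -> Cplx) (z : Cplx) : Prop :=
  exists p q : Cplx, real_diff_at f z p q /\
    Cscal (1 / 2) (Cadd p (Cmul Ci q)) = C0.

Definition Copen (U : Cplx -> Prop) : Prop :=
  forall z, U z -> exists e, 0 < e /\ forall y, Cabs (Csub y z) < e -> U y.

Definition unit_disc (z : Cplx) : Prop := Cabs z < 1.

(* supp(f_{zbar}) (a closed subset of the unit disc D, namely D minus the
   largest open set on which f_{zbar} = 0) is contained in A *)
Definition supp_dbar_subset (f : Cplx -> Cplx) (A : Cplx -> Prop) : Prop :=
  exists U : Cplx -> Prop, Copen U /\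
    (forall z, unit_disc z -> ~ A z -> U z) /\
    (forall z, U z -> unit_disc z -> dbar_zero_at f z).

(* Main.v *)
From Stdlib Require Import Reals Lra Lia ZArith.
From Coquelicot Require Import Coquelicot.
Require Import Defs.
Open Scope R_scope.

Lemma Cabs_Cmod (z : Cplx) : Cabs z = Cmod z.
Proof. destruct z as [x y]. unfold Cabs, Cmod, Cre, Cim; simpl. f_equal; ring. Qed.

Lemma Cabs_ge0 z : 0 <= Cabs z.
Proof. rewrite Cabs_Cmod; apply Cmod_ge_0. Qed.

Lemma Cabs_mul z w : Cabs (Cmul z w) = Cabs z * Cabs w.
Proof. rewrite !Cabs_Cmod. change (Cmul z w) with (Cmult z w). apply Cmod_mult. Qed.

Lemma Cabs_scal a z : Cabs (Cscal a z) = Rabs a * Cabs z.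
Proof.
  replace (Cscal a z) with (Cmul (a,0) z).
  - rewrite Cabs_mul. f_equal. rewrite Cabs_Cmod. apply (Cmod_R a).
  - destruct z; unfold Cmul, Cscal, Cre, Cim; simpl; f_equal; ring.
Qed.

Lemma Cabs_add z w : Cabs (Cadd z w) <= Cabs z + Cabs w.
Proof. rewrite !Cabs_Cmod. change (Cadd z w) with (Cplus z w). apply Cmod_triangle. Qed.

Lemma Cabs_pow z k : Cabs (Cpow z k) = Cabs z ^ k.
Proof.
  induction k; simpl.
  - unfold Cabs, C1, Cre, Cim; simpl. replace (1*1+0*0) with 1 by ring. apply sqrt_1.
  - rewrite Cabs_mul, IHk. reflexivity.
Qed.

Lemma Cabs_sub_tri y z : Cabs y <= Cabs (Csub y z) + Cabs z.
Proof.
  replace y with (Cadd (Csub y z) z) at 1 by (destruct y, z; unfold Csub, Cadd, Copp, Cre, Cim; simpl; f_equal; ring).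
  apply Cabs_add.
Qed.

Lemma multC_comm : forall n m0 : C_AbsRing, mult n m0 = mult m0 n.
Proof. intros; apply Cmult_comm. Qed.
Lemma pow_deriv (k : nat) (x : C_AbsRing) : exists l, is_derive (K:=C_AbsRing) (V:=AbsRing_NormedModule C_AbsRing) (fun z : C_AbsRing => (Cpow z k : C_AbsRing)) x l.
Proof. induction k.
- exists (@zero C_AbsRing). 
 change (is_derive (K:=C_AbsRing) (V:=AbsRing_NormedModule C_AbsRing) (fun _ : C_AbsRing => (C1 : C_AbsRing)) x zero).
 apply (is_derive_const (K:=C_AbsRing) (V:=AbsRing_NormedModule C_AbsRing)).
- destruct IHk as [l Hl].
  pose proof (is_derive_mult (K:=C_AbsRing) (fun t => t) (fun z => (Cpow z k : C_AbsRing)) x _ _ (is_derive_id x) Hl multC_comm) as H.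
  eexists ?[ll].
  change (is_derive (K:=C_AbsRing) (V:=AbsRing_NormedModule C_AbsRing) (fun z : C_AbsRing => mult z (Cpow z k : C_AbsRing)) x ?ll).
  exact H.
Qed.

Lemma g_deriv (m : nat) (d : R) (w : Cplx) (x : C_AbsRing) :
  exists l, is_derive (K:=C_AbsRing) (V:=AbsRing_NormedModule C_AbsRing) (fun z : C_AbsRing => (Cadd (Cadd (Cpow z m) (Cscal d z)) w : C_AbsRing)) x l.
Proof.
  destruct (pow_deriv m x) as [l Hl].
  pose proof (is_derive_mult (K:=C_AbsRing) (fun _ => ((d,0) : C_AbsRing)) (fun t => t) x _ _
     (is_derive_const (K:=C_AbsRing) (V:=AbsRing_NormedModule C_AbsRing) ((d,0) : C_AbsRing) x) (is_derive_id x) multC_comm) as H2.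
  pose proof (is_derive_plus (K:=C_AbsRing) (V:=AbsRing_NormedModule C_AbsRing) _ _ x _ _ Hl H2) as H3.
  pose proof (is_derive_plus (K:=C_AbsRing) (V:=AbsRing_NormedModule C_AbsRing) _ _ x _ _ H3
     (is_derive_const (K:=C_AbsRing) (V:=AbsRing_NormedModule C_AbsRing) (w : C_AbsRing) x)) as H4.
  eexists. eapply (is_derive_ext (K:=C_AbsRing) (V:=AbsRing_NormedModule C_AbsRing)); [|exact H4].
  intros t. destruct t as [t1 t2], w as [w1 w2]. 
  change (Cplus (Cplus (Cpow (t1,t2) m) (Cmult (d,0) (t1,t2))) (w1,w2) = Cadd (Cadd (Cpow (t1, t2) m) (Cscal d (t1, t2))) (w1, w2)).
  destruct (Cpow (t1,t2) m) as [p1 p2].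
  unfold Cplus, Cmult, Cadd, Cscal, Cre, Cim; simpl; f_equal; ring.
Qed.

Lemma minus_C (a b : AbsRing_NormedModule C_AbsRing) : minus a b = Csub a b. Proof. reflexivity. Qed.
Lemma scal_C (a : C_AbsRing) (b : AbsRing_NormedModule C_AbsRing) : scal a b = Cmul a b. Proof. reflexivity. Qed.
Lemma norm_C (b : AbsRing_NormedModule C_AbsRing) : norm b = Cmod b. Proof. reflexivity. Qed.

Lemma dbar_local (f : Cplx -> Cplx) (g : C_AbsRing -> C_AbsRing) (z : C_AbsRing) l rh :
  0 < rh -> (forall y, Cabs (Csub y z) < rh -> f y = g y) ->
  is_derive (K:=C_AbsRing) (V:=AbsRing_NormedModule C_AbsRing) g z l -> dbar_zero_at f z.
Proof.
  intros Hrh Hfg Hd.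
  exists l, (Cmul Defs.Ci l). split.
  - intros eps Heps. destruct Hd as [_ Hd].
    specialize (Hd z (fun P HP => HP) (mkposreal eps Heps)). destruct Hd as [e He].
    exists (Rmin e rh). split. { apply Rmin_pos; [apply cond_pos|lra]. }
    intros h Hh.
    assert (Hh1 : Cabs h < e) by (eapply Rlt_le_trans; [exact Hh| apply Rmin_l]).
    assert (Hh2 : Cabs h < rh) by (eapply Rlt_le_trans; [exact Hh| apply Rmin_r]).
    assert (Ezh : Csub (Cadd z h) z = h) by (destruct z, h; unfold Csub, Cadd, Copp, Cre, Cim; simpl; f_equal; ring).
    assert (Ez : Csub z z = (0,0)) by (destruct z; unfold Csub, Cadd, Copp, Cre, Cim; simpl; f_equal; ring).
    rewrite (Hfg (Cadd z h)) by (rewrite Ezh; exact Hh2).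
    rewrite (Hfg z) by (rewrite Ez; unfold Cabs, Cre, Cim; simpl; replace (0*0+0*0) with 0 by ring; rewrite sqrt_0; lra).
    assert (Hb : AbsRing_ball C_AbsRing z e (Cadd z h)).
    { unfold AbsRing_ball. change (Cmod (Csub (Cadd z h) z) < e).
      rewrite Ezh, <- Cabs_Cmod. exact Hh1. }
    specialize (He _ Hb). simpl in He.
    rewrite !Cabs_Cmod.
    replace (eps * Cmod h) with (eps * Cmod (Csub (Cadd z h) z)) by (rewrite Ezh; reflexivity).
    eapply Rle_trans; [|exact He].
    apply Req_le.
    match goal with |- ?X = _ => change (X = Cmod (Csub (Csub (g (Cadd z h)) (g z)) (Cmul (Csub (Cadd z h) z) l))) end.
    rewrite Ezh. f_equal.
    destruct (g (Cadd z h)), (g z), h, l. unfold Csub, Cadd, Copp, Cmul, Cscal, Defs.Ci, Cre, Cim; simpl; f_equal; ring.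
  - destruct l. unfold Cscal, Cadd, Cmul, Defs.Ci, C0, Cre, Cim; simpl; f_equal; field.
Qed.

Lemma nat_above (x : R) : exists N : nat, x < INR N.
Proof.
  destruct (archimed (Rabs x)) as [H1 _].
  assert (Hp : (0 < up (Rabs x))%Z).
  { apply lt_IZR. pose proof (Rabs_pos x). simpl. lra. }
  exists (Z.to_nat (up (Rabs x))).
  rewrite INR_IZR_INZ, Z2Nat.id by lia.
  pose proof (Rle_abs x). lra.
Qed.

Lemma ln_le' x y : 0 < x -> x <= y -> ln x <= ln y.
Proof. intros Hx Hxy. destruct (Rle_lt_or_eq_dec _ _ Hxy) as [H|H].
  - left; apply ln_increasing; auto.
  - subst; lra. Qed.

Lemma ln_le_sqrt x : 0 < x -> ln x <= 2 * sqrt x.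
Proof.
  intros Hx. pose proof (sqrt_lt_R0 x Hx) as Hs.
  rewrite <- (sqrt_sqrt x) at 1 by lra.
  rewrite ln_mult by auto.
  pose proof (exp_ineq1_le (ln (sqrt x))) as H. rewrite exp_ln in H by auto. lra.
Qed.

Theorem proposition3p7 :
  forall n0 : nat, (0 < n0)%nat ->
  forall s dt Rt : R,
    0 < s < 1 -> 0 < dt < 1 / 16 -> 1 < Rt < 1 / s ->
  exists m0 : nat,
    forall (m : nat) (R0 : R) (r : nat -> Cplx) (w : Cplx) (delta : R),
      (m0 < m)%nat ->
      1 < R0 < Rmin Rt (3 / 2) ->
      E_eps (m - 1) (ln (Rpower R0 (1 / INR n0))) r ->
      Cabs w <= 3 / 4 ->
      dt <= delta <= 1 / 16 ->
      supp_dbar_subset (iota w delta m R0 r)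
        (fun z => unit_disc z /\ s < Cabs z).
Proof.
  intros n0 Hn0 s dt Rt Hs Hdt HRt.
  set (a := / Rt).
  assert (Ha0 : 0 < a) by (apply Rinv_0_lt_compat; lra).
  assert (HaRt : Rt * a = 1) by (apply Rinv_r; lra).
  assert (HsRt : s * Rt < 1).
  { assert (Rt < / s) by (unfold Rdiv in HRt; lra).
    apply (Rmult_lt_compat_l s) in H; [|lra]. rewrite Rinv_r in H; lra. }
  assert (Ha : s < a < 1) by nra.
  set (s1 := (2 * s + a) / 3).
  set (th0 := (s + 2 * a) / (3 * a)).
  assert (Hth0 : th0 < 1) by (unfold th0; apply (Rmult_lt_reg_r (3*a)); [lra|]; field_simplify; lra).
  assert (Hth0p : 0 < th0) by (unfold th0; apply Rdiv_lt_0_compat; lra).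
  assert (Hth0a : a * th0 = s1 + (a - s) / 3) by (unfold th0, s1; field; lra).
  set (c1 := (1 + th0) / 2).
  set (eps := 1 - c1).
  assert (Heps : 0 < eps) by (unfold eps, c1; lra).
  assert (Hc1 : th0 <= c1 * c1) by (unfold c1; nra).
  set (K := - ln dt).
  assert (HK : 0 < K).
  { unfold K. assert (ln dt < ln 1) by (apply ln_increasing; lra). rewrite ln_1 in H; lra. }
  set (tgt := Rmin (dt * (a - s) / 3) (1 / 16)).
  assert (Htgt : 0 < tgt) by (unfold tgt; apply Rmin_pos; [apply Rdiv_lt_0_compat; nra | lra]).
  assert (Hs1 : 0 < s1 < 1) by (unfold s1; lra).
  destruct (pow_lt_1_zero s1 ltac:(rewrite Rabs_right; lra) tgt Htgt) as [N3 HN3].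
  set (B := Rmax (Rmax 2 (1 / (4 * (1 - s1)))) (Rmax (1 / eps) (Rmax ((8 / eps) ^ 2) (4 * K / eps)))).
  destruct (nat_above B) as [N1 HN1].
  exists (max N1 N3).
  intros m R0 r w delta Hm HR0 HE Hw Hdel.
  assert (HmB : B < INR m).
  { eapply Rlt_le_trans; [exact HN1|]. apply le_INR. lia. }
  assert (Hm2 : 2 <= INR m) by (eapply Rle_trans; [|left; exact HmB]; unfold B; eapply Rle_trans; [|apply Rmax_l]; apply Rmax_l).
  assert (Hm3 : 1 / (4 * (1 - s1)) <= INR m) by (eapply Rle_trans; [|left; exact HmB]; unfold B; eapply Rle_trans; [|apply Rmax_l]; apply Rmax_r).
  assert (Hm4 : 1 / eps <= INR m) by (eapply Rle_trans; [|left; exact HmB]; unfold B; eapply Rle_trans; [|apply Rmax_r]; apply Rmax_l).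
  assert (Hm5 : (8 / eps) ^ 2 <= INR m) by (eapply Rle_trans; [|left; exact HmB]; unfold B; eapply Rle_trans; [|apply Rmax_r]; eapply Rle_trans; [|apply Rmax_r]; apply Rmax_l).
  assert (Hm6 : 4 * K / eps <= INR m) by (eapply Rle_trans; [|left; exact HmB]; unfold B; eapply Rle_trans; [|apply Rmax_r]; eapply Rle_trans; [|apply Rmax_r]; apply Rmax_r).
  assert (Hpow : s1 ^ m <= tgt).
  { specialize (HN3 m ltac:(lia)). rewrite Rabs_right in HN3; [lra|]. apply Rle_ge, pow_le; lra. }
  assert (Hpow1 : s1 ^ m <= dt * (a - s) / 3) by (eapply Rle_trans; [exact Hpow| apply Rmin_l]).
  assert (Hpow2 : s1 ^ m <= 1 / 16) by (eapply Rle_trans; [exact Hpow| apply Rmin_r]).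
  set (im := / INR m).
  assert (Him : INR m * im = 1) by (apply Rinv_r; lra).
  assert (Him0 : 0 < im) by (apply Rinv_0_lt_compat; lra).
  set (P := Rpower (delta / INR m) (1 / (INR m - 1))).
  assert (HP : c1 <= P).
  { unfold P, Rpower. eapply Rle_trans; [|apply exp_ineq1_le].
    assert (Hd0 : 0 < delta) by lra.
    assert (Hln : ln (delta / INR m) = ln delta - ln (INR m)).
    { unfold Rdiv. rewrite ln_mult, ln_Rinv; try apply Rinv_0_lt_compat; lra. }
    rewrite Hln.
    assert (HlnD : - K <= ln delta) by (unfold K; rewrite Ropp_involutive; apply ln_le'; lra).
    assert (HlnM : ln (INR m) <= 2 * sqrt (INR m)) by (apply ln_le_sqrt; lra).
    assert (Hsq : 8 / eps <= sqrt (INR m)).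
    { rewrite <- (sqrt_pow2 (8 / eps)) by (apply Rlt_le, Rdiv_lt_0_compat; lra).
      apply sqrt_le_1_alt; exact Hm5. }
    assert (Hqq : sqrt (INR m) * sqrt (INR m) = INR m) by (apply sqrt_sqrt; lra).
    assert (Heq8 : 8 <= eps * sqrt (INR m)).
    { apply (Rmult_le_compat_l eps) in Hsq; [|lra]. 
      replace (eps * (8 / eps)) with 8 in Hsq by (field; lra). exact Hsq. }
    assert (HK4 : 4 * K <= eps * INR m).
    { apply (Rmult_le_compat_l eps) in Hm6; [|lra].
      replace (eps * (4 * K / eps)) with (4 * K) in Hm6 by (field; lra). exact Hm6. }
    assert (Hsqp : 0 <= sqrt (INR m)) by apply sqrt_pos.
    assert (HX : - eps * (INR m - 1) <= ln delta - ln (INR m)) by nra.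
    assert (Hinv : 0 <= 1 / (INR m - 1)) by (apply Rlt_le, Rdiv_lt_0_compat; lra).
    apply (Rmult_le_compat_l (1 / (INR m - 1))) in HX; [|exact Hinv].
    replace (1 / (INR m - 1) * (- eps * (INR m - 1))) with (- eps) in HX by (field; lra).
    unfold eps in HX. lra. }
  assert (Hq : c1 <= (INR m - 1) / INR m).
  { replace ((INR m - 1) / INR m) with (1 - im) by (unfold im; field; lra).
    assert (eps * INR m >= 1).
    { unfold Rdiv in Hm4. rewrite Rmult_1_l in Hm4.
      apply (Rmult_le_compat_l eps) in Hm4; [|lra]. rewrite Rinv_r in Hm4; lra. }
    unfold eps in H. nra. }
  assert (HLam : delta * th0 <= Lambda delta m).
  { unfold Lambda. fold P. 
    assert (0 <= c1) by (unfold c1; lra).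
    assert (c1 * c1 <= P * ((INR m - 1) / INR m)) by (apply Rmult_le_compat; lra).
    nra. }
  assert (HLp : 0 < Lambda delta m) by nra.
  assert (HaR0 : a < / R0).
  { unfold a. apply Rinv_lt_contravar; [nra|]. eapply Rlt_le_trans; [apply HR0|apply Rmin_l]. }
  assert (HR0inv : / R0 < 1) by (rewrite <- Rinv_1; apply Rinv_lt_contravar; lra).
  assert (Hs1m : 4 * delta / INR m <= 1 - s1).
  { assert (4 * INR m * (1 - s1) >= 1).
    { unfold Rdiv in Hm3. rewrite Rmult_1_l in Hm3.
      apply (Rmult_le_compat_l (4 * (1 - s1))) in Hm3; [|lra]. rewrite Rinv_r in Hm3; lra. }
    unfold Rdiv. fold im. nra. }
  assert (Heq : forall z, Cabs z < s1 -> iota w delta m R0 r z = Cadd (Cadd (Cpow z m) (Cscal (delta * 1) z)) w).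
  { intros z Hz.
    pose proof (Cabs_ge0 z) as Hz0.
    assert (He1 : eta_hat delta m (Cabs z) = 1).
    { unfold eta_hat. destruct (Rle_dec (Cabs z) (1 - 4 * delta / INR m)) as [_|n]; [reflexivity|].
      exfalso; apply n; lra. }
    unfold iota, psi. rewrite He1.
    set (ps := Cadd (Cpow z m) (Cscal (delta * 1) z)).
    assert (Hps : Cabs ps <= s1 ^ m + delta * s1).
    { unfold ps. eapply Rle_trans; [apply Cabs_add|].
      rewrite Cabs_pow, Cabs_scal, Rmult_1_r, Rabs_right by lra.
      assert (Cabs z ^ m <= s1 ^ m) by (apply pow_incr; lra). nra. }
    assert (Hps2 : Cabs ps <= a * Lambda delta m) by nra.
    unfold betaL, beta.
    set (y := Cscal (/ Lambda delta m) ps).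
    assert (Hy : Cabs y <= a).
    { unfold y. rewrite Cabs_scal, Rabs_right by (apply Rle_ge, Rlt_le, Rinv_0_lt_compat; lra).
      apply (Rmult_le_compat_l (/ Lambda delta m)) in Hps2; [|apply Rlt_le, Rinv_0_lt_compat; lra].
      replace (/ Lambda delta m * (a * Lambda delta m)) with a in Hps2 by (field; lra). exact Hps2. }
    destruct (Rle_dec R0 (Cabs y)) as [H1|_]; [lra|].
    destruct (Rle_dec (Cabs y) (/ R0)) as [_|H2]; [|lra].
    replace (Cscal (Lambda delta m) y) with ps.
    2: { unfold y. destruct ps. unfold Cscal, Cre, Cim; simpl; f_equal; field; lra. }
    unfold rho. destruct (Rle_dec (Cabs ps) (1 / 8)) as [_|H3]; [reflexivity|].
    exfalso; apply H3. nra. }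
  exists (fun z => Cabs z < s1). split; [|split].
  - intros z Hz. exists (s1 - Cabs z). split; [lra|].
    intros y Hy. pose proof (Cabs_sub_tri y z). lra.
  - intros z Hu HnA. destruct (Rlt_dec s (Cabs z)) as [Hlt|Hge].
    + exfalso; apply HnA; split; assumption.
    + apply Rnot_lt_le in Hge. unfold s1; lra.
  - intros z Hz _.
    destruct (g_deriv m (delta * 1) w z) as [l Hl].
    apply (dbar_local _ (fun z : C_AbsRing => (Cadd (Cadd (Cpow z m) (Cscal (delta * 1) z)) w : C_AbsRing)) z l (s1 - Cabs z)); [lra| |exact Hl].
    intros y Hy. rewrite Heq; [reflexivity|]. pose proof (Cabs_sub_tri y z). lra.
Qed.
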